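(* Let $G$ be a directed graph in which every vertex is reachable from a vertex $s$, let $t$ be a vertex of $G$, and let $k\ge 1$ be an integer. Assume that for no $\ell\in\{k,\dots,2k-1\}$ does $G$ contain an $(s,t)$-path of length exactly $dist_G(s,t)+\ell$, and that $G$ contains an $(s,t)$-path of length at least $dist_G(s,t)+k$; let $P$ be such a path of minimum length. For $i\ge0$ let $L_i$ be the set of vertices at distance exactly $i$ from $s$. Let $p$ be the smallest integer $i\ge1$ such that $L_i$ contains more than one vertex of $P$, and let $u,v$ be the first and second vertices of $P$ (in order along $P$) lying in $L_p$. Let $x$ be the vertex of $P_{u,v}$ such that $P_{u,x}$ has length exactly $k$ (the path $P_{u,v}$ has more than $k$ edges). Let $k''=\min\{2k+1,|V(P_{v,t})|\}$ and let $z$ be the last vertex of the subpath of $P_{v,t}$ formed by its first $k''$ vertices. Let $P'$ be a path of length at most $k$ from $u$ to $x$ in the induced subgraph $G[\bigcup_{i\ge p}L_i]$. Then every vertex of $P_{v,t}$ that belongs to $P'$ lies on the subpath $P_{v,z}$.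
   Context: Paths are simple directed paths; the length of a path is its number of edges. $dist_G(a,b)$ denotes the length of a shortest directed $(a,b)$-path in $G$. For a path $P$ and vertices $a,b$ on it (with $a$ before $b$), $P_{a,b}$ denotes the subpath of $P$ from $a$ to $b$. *)

(* Defs.v *)
From mathcomp Require Import all_boot.
Set Implicit Arguments. Unset Strict Implicit. Unset Printing Implicit Defensive.

Section Graph.
Variables (T : finType) (e : rel T).

(* [spath a b q]: the vertex sequence a :: q is a simple directed (a,b)-path.
   Its length (number of edges) is [size q]. *)
Definition spath (a b : T) (q : seq T) : bool :=
  [&& path e a q, uniq (a :: q) & last a q == b].

Definition has_spath_len (a b : T) (n : nat) : bool :=
  [exists q : n.-tuple T, spath a b q].

(* dist a b = length of a shortest directed (a,b)-path
   (a simple path has < #|T| edges; value #|T| if b is unreachable). *)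
Definition dist (a b : T) : nat :=
  find (has_spath_len a b) (iota 0 #|T|).

Definition layer (s : T) (i : nat) : {set T} := [set w | dist s w == i].

End Graph.

(* Main.v *)
Require Import Defs.
From mathcomp Require Import all_boot.
From mathcomp Require Import zify.
Set Implicit Arguments. Unset Strict Implicit. Unset Printing Implicit Defensive.

Section Aux.
Variables (T : finType) (e : rel T).

Lemma spath_lenP a b q : spath e a b q -> has_spath_len e a b (size q).
Proof.
move=> H; apply/existsP; exists (in_tuple q); exact H.
Qed.

Lemma spath_size a b q : spath e a b q -> size q < #|T|.
Proof.
case/and3P=> _ U _.
have /card_uniqP Hc := U.
by have := max_card (mem (a :: q)); rewrite Hc.
Qed.

Lemma dist_le_spath a b q : spath e a b q -> dist e a b <= size q.
Proof.
move=> H; have Hs := spath_size H; have Hl := spath_lenP H.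
rewrite /dist; case: (leqP (find (has_spath_len e a b) (iota 0 #|T|)) (size q)) => // Hlt.
have := before_find 0 Hlt; rewrite nth_iota // add0n Hl //.
Qed.

Lemma walk_dist a q : path e a q -> dist e a (last a q) <= size q.
Proof.
move=> H; case: (shortenP H) => q' Hp Hu Hsub.
have Hs : spath e a (last a q') q' by rewrite /spath Hp Hu eqxx.
apply: leq_trans (dist_le_spath Hs) _.
apply: uniq_leq_size => //; by case/andP: Hu.
Qed.

Lemma dist_spec a b : connect e a b -> exists q, spath e a b q /\ size q = dist e a b.
Proof.
case/connectP=> q0 H0 ->; case: (shortenP H0) => q Hp Hu _.
have Hs : spath e a (last a q) q by rewrite /spath Hp Hu eqxx.
have Hlt := spath_size Hs.
have Hhas : has (has_spath_len e a (last a q)) (iota 0 #|T|).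
  apply/hasP; exists (size q); first by rewrite mem_iota.
  exact: spath_lenP.
have := nth_find 0 Hhas; rewrite -/(dist e a (last a q)).
have Hd : dist e a (last a q) < #|T| by move: Hhas; rewrite has_find size_iota.
rewrite nth_iota // add0n => /existsP[t Ht]; exists t; split => //.
by rewrite size_tuple.
Qed.

Lemma prefix_path a P j : path e a P -> j <= size P ->
  [/\ path e a (take j P), last a (take j P) = nth a (a :: P) j & size (take j P) = j].
Proof.
elim: P a j => [|y P IH] a [|j] //=.
move=> /andP[ea hp] hj; have [h1 h2 h3] := IH y j hp hj.
split; [by rewrite ea h1 | rewrite h2; apply: set_nth_default => /= | by rewrite h3].
by rewrite ltnS.
Qed.

Lemma suffix_path a P j : path e a P -> j <= size P ->
  path e (nth a (a :: P) j) (drop j P) /\ last (nth a (a :: P) j) (drop j P) = last a P.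
Proof.
elim: P a j => [|y P IH] a [|j] //=.
move=> /andP[ea hp] hj; have [h1 h2] := IH y j hp hj.
have -> : nth a (y :: P) j = nth y (y :: P) j by apply: set_nth_default; rewrite /= ltnS.
by [].
Qed.

End Aux.
Theorem lemma3 (T : finType) (e : rel T) (s t : T) (k : nat)
  (reach : forall w : T, connect e s w)
  (hk : 1 <= k)
  (noLen : forall l : nat, k <= l <= (2 * k).-1 ->
      ~ (exists q : seq T, spath e s t q /\ size q = dist e s t + l))
  (P : seq T)
  (hP : spath e s t P) (hPlen : dist e s t + k <= size P)
  (hPmin : forall q : seq T, spath e s t q -> dist e s t + k <= size q ->
      size P <= size q)
  (p : nat) (hp1 : 1 <= p)
  (hp : 1 < #|[set w in s :: P | w \in layer e s p]|)
  (hpmin : forall i : nat, 1 <= i < p ->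
      #|[set w in s :: P | w \in layer e s i]| <= 1)
  (iu iv : nat) (huv : iu < iv) (hiv : iv < size (s :: P))
  (hu : nth s (s :: P) iu \in layer e s p)
  (hv : nth s (s :: P) iv \in layer e s p)
  (hfirst : forall j : nat, j < iv -> j != iu ->
      nth s (s :: P) j \notin layer e s p)
  (Q : seq T)
  (hQ : spath e (nth s (s :: P) iu) (nth s (s :: P) (iu + k)) Q)
  (hQlen : size Q <= k)
  (hQin : forall w : T, w \in nth s (s :: P) iu :: Q -> p <= dist e s w) :
  let k'' := minn (2 * k).+1 (size (s :: P) - iv) in
  forall j : nat, iv <= j < size (s :: P) ->
    nth s (s :: P) j \in nth s (s :: P) iu :: Q ->
    j <= iv + k'' - 1.
Proof.
move=> k'' j /andP[hj1 hj2] hin.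
set S := s :: P in hu hv hj2 hin hQ hQin hp hpmin hiv hfirst *.
set n := size P.
have hSn : size S = n.+1 by [].
have huniqS : uniq S by case/and3P: hP.
have hpathP : path e s P by case/and3P: hP.
have hlastP : last s P = t by case/and3P: hP => _ _ /eqP.
set f := fun i => dist e s (nth s S i).
have hfu : f iu = p by move: hu; rewrite inE => /eqP.
have hfv : f iv = p by move: hv; rewrite inE => /eqP.
have hstep : forall i, i < n -> f i.+1 <= (f i).+1.
  move=> i hi; have [q [hq hsq]] := dist_spec (reach (nth s S i)).
  case/and3P: hq => hq1 _ /eqP hq3.
  have hw : path e s (rcons q (nth s S i.+1)).
    rewrite rcons_path hq1 hq3 /=.
    by move/pathP: hpathP => /(_ s i hi).
  have := walk_dist hw; rewrite last_rcons size_rcons -/(f i.+1) hsq.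
  done.
have hf0 : f 0 = 0.
  apply/eqP; rewrite -leqn0; rewrite /f /=.
  by have := dist_le_spath (e := e) (a := s) (b := s) (q := [::]); apply; rewrite /spath /= eqxx.
have hivt : forall m, m <= n -> forall q, q <= f m -> exists2 i, i <= m & f i = q.
  elim=> [|m IH] hm q hq.
    by exists 0 => //; move: hq; rewrite hf0 leqn0 => /eqP.
  case: (ltngtP q (f m.+1)) => hq'.
  - have := hstep m hm => hs.
    have [i hi1 hi2] := IH (ltnW hm) q (ltnSE (leq_trans hq' hs)).
    by exists i => //; apply: leq_trans hi1 _.
  - by move: hq; rewrite leqNgt hq'.
  - by exists m.+1.
have hpiu : p <= iu.
  have hiun : iu <= n by rewrite -ltnS -hSn (ltn_trans huv hiv).
  have [h1 h2 h3] := prefix_path hpathP hiun.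
  by have := walk_dist h1; rewrite h2 h3 -/(f iu) hfu.
have hiun : iu < n by move: huv hiv; rewrite hSn; lia.
have hge : forall j, iu < j <= n -> p <= f j.
  move=> j' /andP[hj'1 hj'2]; rewrite leqNgt; apply/negP => hlt.
  have hjS : j' < size S by rewrite hSn ltnS.
  case: (posnP (f j')) => hz.
    have [q [hq hsq]] := dist_spec (reach (nth s S j')).
    move: hsq; rewrite -/(f j') hz => /size0nil hq0; subst q.
    case/and3P: hq => _ _ /= /eqP hs.
    have := nth_uniq s (isT : 0 < size S) hjS huniqS.
    rewrite /= -hs eqxx => /esym/eqP; lia.
  have hle : f j' <= f iu by rewrite hfu ltnW.
  have [i hi1 hi2] := hivt iu (ltnW hiun) (f j') hle.
  have hiS : i < size S by rewrite hSn; lia.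
  have hne : nth s S i != nth s S j' by rewrite nth_uniq //; lia.
  have hsub : [set nth s S i; nth s S j'] \subset [set w in S | w \in layer e s (f j')].
    apply/subsetP => w; rewrite in_set2 => /orP[] /eqP ->; rewrite in_set mem_nth //=;
    rewrite /layer in_set; [rewrite -hi2|]; exact: eqxx.
  have := subset_leq_card hsub; rewrite cards2 hne.
  have := hpmin (f j'); rewrite hz hlt => /(_ isT) h1 h2.
  have := leq_trans h2 h1; done.
have hivn : iv <= n by move: hiv; rewrite hSn ltnS.
have hR : p + (n - iv) < dist e s t + k.
  have [q [hq hsq]] := dist_spec (reach (nth s S iv)).
  move: hsq; rewrite -/(f iv) hfv => hsq.
  case/and3P: hq => hq1 hq2 /eqP hq3.
  have [hd1 hd2] := suffix_path hpathP hivn.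
  have hRs : spath e s t (q ++ drop iv P).
    apply/and3P; split; first by rewrite cat_path hq1 hq3 hd1.
      2: by rewrite last_cat hq3 hd2 hlastP.
    have hU : uniq ((s :: q) ++ drop iv P); last exact: hU.
    rewrite cat_uniq hq2 drop_uniq; last by case/andP: huniqS.
    rewrite andbT; apply/hasPn => y hy; apply/negP => hy2.
    have hqS : index y (s :: q) <= size q by rewrite -ltnS (index_mem y (s :: q)).
    have [h1 h2 h3] := prefix_path hq1 hqS.
    move: (walk_dist h1); rewrite h2 h3 nth_index // => hdy.
    have [i' hi' hyeq] : exists2 i', i' < n - iv & y = nth s P (iv + i').
      exists (index y (drop iv P)); first by rewrite -size_drop index_mem.
      by rewrite -nth_drop nth_index.
    subst y.
    have hjj := hge (iv + i').+1 (ltac:(move: hi' huv hivn; clear; lia)).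
    rewrite /f /= in hjj.
    have hidx : index (nth s P (iv + i')) (s :: q) = size q by move: hjj hdy hqS hsq; clear; lia.
    rewrite nth_index // hidx take_size hq3 in h2.
    have hb : (iv + i').+1 < size S by rewrite hSn ltnS; move: hi' hivn; clear; lia.
    have := nth_uniq s hiv hb huniqS.
    rewrite h2 eqxx => /esym/eqP; clear; lia.
  rewrite ltnNge; apply/negP => hc.
  have := hPmin _ hRs; rewrite size_cat size_drop hsq -/n => /(_ hc).
  move: hpiu huv hivn; clear; lia.
have hjn : j <= n by move: hj2; rewrite hSn ltnS.
rewrite leqNgt; apply/negP => hjgt.
have hjbig : iv + (2 * k).+1 <= j.
  move: hjgt hjn hivn; rewrite /k'' hSn; clear; lia.
have [qu [hqu hsqu]] := dist_spec (reach (nth s S iu)).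
move: hsqu; rewrite -/(f iu) hfu => hsqu.
case/and3P: hqu => hqu1 _ /eqP hqu3.
case/and3P: hQ => hQ1 _ _.
set u := nth s S iu in hin hQ1 hqu3.
have ha : index (nth s S j) (u :: Q) <= size Q by rewrite -ltnS (index_mem _ (u :: Q)).
have [h1 h2 h3] := prefix_path hQ1 ha.
rewrite nth_index // in h2.
have [hd1 hd2] := suffix_path hpathP hjn.
have hW : path e s (qu ++ take (index (nth s S j) (u :: Q)) Q ++ drop j P).
  by rewrite cat_path hqu1 hqu3 cat_path h1 h2 hd1.
have := walk_dist hW.
rewrite last_cat hqu3 last_cat h2 hd2 hlastP !size_cat h3 size_drop hsqu -/n.
move: hR ha hQlen hjbig hjn; clear; lia.
Qed.
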